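(* Let $k\ge 2$, and let $p,q$ be real polynomials with $\deg p=k$, $\deg q=k-1$, whose roots are real, simple and strictly interlacing, with roots of $p$ denoted $p_1<\dots<p_k$. Let $r>0$ and $\varphi\in(-\pi,\pi]$. Then each open disk $D_j$ ($j=1,\dots,k-1$), as well as the region $\{z\in\mathbb{C}:|z-\frac{p_1+p_k}{2}|>\frac{p_k-p_1}{2}\}$, contains at most one solution $z$ of the equation $\frac{q(z)}{p(z)}=re^{i\varphi}$.
   Context: $D_j$ denotes the open disk having the segment $[p_j,p_{j+1}]$ as a diameter (center $\frac{p_j+p_{j+1}}2$, radius $\frac{p_{j+1}-p_j}2$). *)

(* Defs.v *)
From Stdlib Require Import Reals Lra List.
Open Scope R_scope.

(* Complex numbers as (real part, imaginary part). *)
Definition C := (R * R)%type.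
Definition Cof (x : R) : C := (x, 0).
Definition Cadd (z w : C) : C := (fst z + fst w, snd z + snd w).
Definition Csub (z w : C) : C := (fst z - fst w, snd z - snd w).
Definition Cmul (z w : C) : C :=
  (fst z * fst w - snd z * snd w, fst z * snd w + snd z * fst w).
Definition Cinv (z : C) : C :=
  (fst z / (fst z ^ 2 + snd z ^ 2), - snd z / (fst z ^ 2 + snd z ^ 2)).
Definition Cdiv (z w : C) : C := Cmul z (Cinv w).
Definition Cnorm (z : C) : R := sqrt (fst z ^ 2 + snd z ^ 2).
Definition Cpolar (r phi : R) : C := (r * cos phi, r * sin phi).

(* Real polynomials: list of coefficients in increasing degree order,
   [a0; a1; ...; an] represents a0 + a1 X + ... + an X^n. *)
Definition rpoly := list R.
Definition peval (p : rpoly) (x : R) : R :=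
  fold_right (fun a acc => a + x * acc) 0 p.
Definition pevalC (p : rpoly) (z : C) : C :=
  fold_right (fun a acc => Cadd (Cof a) (Cmul z acc)) (0, 0) p.
Definition has_degree (p : rpoly) (n : nat) : Prop :=
  length p = S n /\ nth n p 0 <> 0.

(* z solves q(z)/p(z) = w (the quotient must be defined: p(z) <> 0). *)
Definition is_solution (p q : rpoly) (w z : C) : Prop :=
  pevalC p z <> (0, 0) /\ Cdiv (pevalC q z) (pevalC p z) = w.

Definition in_diam_disk (a b : R) (z : C) : Prop :=
  Cnorm (Csub z (Cof ((a + b) / 2))) < (b - a) / 2.
Definition in_exterior (a b : R) (z : C) : Prop :=
  Cnorm (Csub z (Cof ((a + b) / 2))) > (b - a) / 2.

Definition at_most_one (P : C -> Prop) : Prop :=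
  forall z1 z2, P z1 -> P z2 -> z1 = z2.

(* Main.v *)
Require Import Defs.
From Stdlib Require Import Reals Lra Lia Psatz List Ring Field Classical.
Import Defs.
Open Scope R_scope.

Definition C0 : C := (0,0).
Definition C1 : C := (1,0).
Definition Copp (z:C) : C := (- fst z, - snd z).

Lemma Ceq (z w : C) : fst z = fst w -> snd z = snd w -> z = w.
Proof. destruct z, w; simpl; intros; subst; auto. Qed.

Lemma C_ring : ring_theory C0 C1 Cadd Cmul Csub Copp (@eq C).
Proof.
  constructor; intros; apply Ceq; unfold Cadd,Cmul,Csub,Copp,C0,C1; simpl; ring.
Qed.
Add Ring Cring : C_ring.

Lemma C_field : field_theory C0 C1 Cadd Cmul Csub Copp Cdiv Cinv (@eq C).
Proof.
  constructor.
  - exact C_ring.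
  - intro H; injection H; lra.
  - reflexivity.
  - intros [x y] H. unfold Cinv, Cmul, C1; simpl.
    assert (Hn : x^2 + y^2 <> 0).
    { intro E. apply H. unfold C0. assert (x = 0) by nra. assert (y = 0) by nra. subst; auto. }
    apply Ceq; simpl; field; auto.
    all: intro E; apply Hn; nra.
Qed.
Add Field Cfield : C_field.

Lemma test (a b : C) : a <> C0 -> b <> C0 -> Cinv (Cmul a b) = Cmul (Cinv a) (Cinv b).
Proof. intros. field. split; auto. Qed.

Lemma Cof_add x y : Cof (x + y) = Cadd (Cof x) (Cof y).
Proof. apply Ceq; simpl; ring. Qed.
Lemma Cof_mul x y : Cof (x * y) = Cmul (Cof x) (Cof y).
Proof. apply Ceq; simpl; ring. Qed.
Lemma Cof_sub x y : Cof (x - y) = Csub (Cof x) (Cof y).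
Proof. apply Ceq; simpl; ring. Qed.
Lemma Cof_inv x : x <> 0 -> Cof (/ x) = Cinv (Cof x).
Proof. intros; apply Ceq; simpl; field; auto. Qed.
Lemma Cof_inj x y : Cof x = Cof y -> x = y.
Proof. intro H; injection H; auto. Qed.
Lemma Cof0 : Cof 0 = C0. Proof. reflexivity. Qed.

Lemma pevalC_Cof P x : pevalC P (Cof x) = Cof (peval P x).
Proof.
  induction P as [|a P IH]; simpl. reflexivity.
  rewrite IH. apply Ceq; simpl; ring.
Qed.

Lemma Cmul_neq0 x y : x <> C0 -> y <> C0 -> Cmul x y <> C0.
Proof.
  intros hx hy E. apply hy.
  replace y with (Cmul (Cinv x) (Cmul x y)) by (field; auto).
  rewrite E. ring.
Qed.

Lemma Cmul_eq0 x y : Cmul x y = C0 -> x <> C0 -> y = C0.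
Proof. intros E hx. destruct (classic (y = C0)); auto. exfalso; exact (Cmul_neq0 x y hx H E). Qed.

Fixpoint sumC (n : nat) (f : nat -> C) : C :=
  match n with O => C0 | S m => Cadd (sumC m f) (f (S m)) end.
Fixpoint prodC (n : nat) (f : nat -> C) : C :=
  match n with O => C1 | S m => Cmul (prodC m f) (f (S m)) end.
Fixpoint sumR (n : nat) (f : nat -> R) : R :=
  match n with O => 0 | S m => sumR m f + f (S m) end.
Fixpoint prodR (n : nat) (f : nat -> R) : R :=
  match n with O => 1 | S m => prodR m f * f (S m) end.

Lemma sumC_ext n f g : (forall j, (1 <= j <= n)%nat -> f j = g j) -> sumC n f = sumC n g.
Proof.
  induction n; simpl; intros H; auto.
  rewrite IHn by (intros; apply H; lia). rewrite H by lia. reflexivity.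
Qed.
Lemma prodC_ext n f g : (forall j, (1 <= j <= n)%nat -> f j = g j) -> prodC n f = prodC n g.
Proof.
  induction n; simpl; intros H; auto.
  rewrite IHn by (intros; apply H; lia). rewrite H by lia. reflexivity.
Qed.
Lemma prodR_ext n f g : (forall j, (1 <= j <= n)%nat -> f j = g j) -> prodR n f = prodR n g.
Proof.
  induction n; simpl; intros H; auto.
  rewrite IHn by (intros; apply H; lia). rewrite H by lia. reflexivity.
Qed.
Lemma sumC_add n f g : sumC n (fun j => Cadd (f j) (g j)) = Cadd (sumC n f) (sumC n g).
Proof. induction n; simpl. apply Ceq; simpl; ring. rewrite IHn; ring. Qed.
Lemma sumC_mull n c f : sumC n (fun j => Cmul c (f j)) = Cmul c (sumC n f).
Proof. induction n; simpl. apply Ceq; simpl; ring. rewrite IHn; ring. Qed.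
Lemma sumC_fst n f : fst (sumC n f) = sumR n (fun j => fst (f j)).
Proof. induction n; simpl; auto. rewrite IHn; auto. Qed.
Lemma prodC_Cof n f : prodC n (fun j => Cof (f j)) = Cof (prodR n f).
Proof. induction n; simpl. reflexivity. rewrite IHn, Cof_mul; auto. Qed.
Lemma prodC_neq0 n f : (forall j, (1 <= j <= n)%nat -> f j <> C0) -> prodC n f <> C0.
Proof.
  induction n; simpl; intros H.
  - intro E; injection E; lra.
  - apply Cmul_neq0. apply IHn; intros; apply H; lia. apply H; lia.
Qed.
Lemma prodR_pos n f : (forall j, (1 <= j <= n)%nat -> 0 < f j) -> 0 < prodR n f.
Proof.
  induction n; simpl; intros H. lra.
  apply Rmult_lt_0_compat. apply IHn; intros; apply H; lia. apply H; lia.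
Qed.
Lemma prodR_mul n f g : prodR n (fun j => f j * g j) = prodR n f * prodR n g.
Proof. induction n; simpl. ring. rewrite IHn; ring. Qed.
Lemma sumR_pos n f : (1 <= n)%nat -> (forall j, (1 <= j <= n)%nat -> 0 < f j) -> 0 < sumR n f.
Proof.
  induction n; simpl; intros Hn H. lia.
  destruct n. simpl. assert (0 < f 1%nat) by (apply H; lia). lra.
  assert (0 < sumR (S n) f) by (apply IHn; [lia| intros; apply H; lia]).
  assert (0 < f (S (S n))) by (apply H; lia). lra.
Qed.

Fixpoint pdiv (P : rpoly) (a : R) : rpoly :=
  match P with
  | nil => nil
  | c :: P' => match P' with nil => nil | _ => peval P' a :: pdiv P' a end
  end.

Lemma pdiv_spec P a z :
  pevalC P z = Cadd (Cof (peval P a)) (Cmul (Csub z (Cof a)) (pevalC (pdiv P a) z)).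
Proof.
  induction P as [|c P IH].
  - simpl. apply Ceq; simpl; ring.
  - destruct P as [|d P'].
    + simpl. apply Ceq; simpl; ring.
    + change (pevalC (c :: d :: P') z) with (Cadd (Cof c) (Cmul z (pevalC (d :: P') z))).
      change (peval (c :: d :: P') a) with (c + a * peval (d :: P') a).
      change (pdiv (c :: d :: P') a) with (peval (d :: P') a :: pdiv (d :: P') a).
      change (pevalC (peval (d :: P') a :: pdiv (d :: P') a) z) with
        (Cadd (Cof (peval (d :: P') a)) (Cmul z (pevalC (pdiv (d :: P') a) z))).
      rewrite IH. rewrite Cof_add, Cof_mul. ring.
Qed.

Lemma pdiv_specR P a x : peval P x = peval P a + (x - a) * peval (pdiv P a) x.
Proof.
  apply Cof_inj. rewrite <- pevalC_Cof, (pdiv_spec P a (Cof x)), pevalC_Cof.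
  rewrite Cof_add, Cof_mul, Cof_sub. reflexivity.
Qed.

Lemma pdiv_len P a : length (pdiv P a) = pred (length P).
Proof.
  induction P as [|c P IH]; simpl; auto.
  destruct P as [|d P']; auto. change (length (pdiv (c :: d :: P') a)) with (S (length (pdiv (d :: P') a))).
  simpl in IH |- *. rewrite IH. reflexivity.
Qed.

Definition distinct_nodes (a : nat -> R) (n : nat) :=
  forall i j, (1 <= i <= n)%nat -> (1 <= j <= n)%nat -> i <> j -> a i <> a j.

Lemma factor n : forall P (a : nat -> R), (length P <= S n)%nat -> distinct_nodes a n ->
  (forall i, (1 <= i <= n)%nat -> peval P (a i) = 0) ->
  exists L, forall z, pevalC P z = Cmul (Cof L) (prodC n (fun i => Csub z (Cof (a i)))).
Proof.
  induction n; intros P a Hl Hd Hr.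
  - destruct P as [|c [|d P']]; simpl in Hl.
    + exists 0. intros z; apply Ceq; simpl; ring.
    + exists c. intros z; apply Ceq; simpl; ring.
    + lia.
  - destruct (IHn (pdiv P (a (S n))) a) as [L HL].
    + rewrite pdiv_len. lia.
    + intros i j Hi Hj; apply Hd; lia.
    + intros i Hi. pose proof (pdiv_specR P (a (S n)) (a i)) as E.
      rewrite (Hr i) in E by lia. rewrite (Hr (S n)) in E by lia.
      assert (a i - a (S n) <> 0) by (apply Rminus_eq_contra, Hd; lia).
      symmetry in E. rewrite Rplus_0_l in E.
      apply Rmult_integral in E as [E|E]; [lra| auto].
    + exists L. intro z. rewrite (pdiv_spec P (a (S n)) z), HL, (Hr (S n)) by lia.
      simpl. rewrite Cof0. ring.
Qed.

Definition skip (j i : nat) : nat := if (i <? j)%nat then i else S i.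
Definition piC (a : nat -> R) (m j : nat) : C :=
  prodC m (fun i => Csub (Cof (a j)) (Cof (a (skip j i)))).
Definition piR (a : nat -> R) (m j : nat) : R :=
  prodR m (fun i => a j - a (skip j i)).

Lemma piC_R a m j : piC a m j = Cof (piR a m j).
Proof.
  unfold piC, piR. rewrite <- prodC_Cof. apply prodC_ext. intros; symmetry; apply Cof_sub.
Qed.

Lemma piC_S a m j : (1 <= j <= S m)%nat ->
  piC a (S m) j = Cmul (piC a m j) (Csub (Cof (a j)) (Cof (a (S (S m))))).
Proof.
  intros Hj. unfold piC at 1. simpl. fold (piC a m j). unfold skip.
  replace (S m <? j)%nat with false by (symmetry; apply Nat.ltb_ge; lia). reflexivity.
Qed.

Lemma piC_last a m : piC a m (S m) = prodC m (fun i => Csub (Cof (a (S m))) (Cof (a i))).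
Proof.
  unfold piC. apply prodC_ext. intros i Hi. unfold skip.
  replace (i <? S m)%nat with true by (symmetry; apply Nat.ltb_lt; lia). reflexivity.
Qed.

Lemma Csub_Cof_neq0 x y : x <> y -> Csub (Cof x) (Cof y) <> C0.
Proof. intros H E. injection E; intros; apply H; lra. Qed.

Lemma piC_neq0 a m j : distinct_nodes a (S m) -> (1 <= j <= S m)%nat -> piC a m j <> C0.
Proof.
  intros Hd Hj. unfold piC. apply prodC_neq0. intros i Hi.
  apply Csub_Cof_neq0. unfold skip. destruct (i <? j)%nat eqn:E.
  - apply Nat.ltb_lt in E. apply Hd; lia.
  - apply Nat.ltb_ge in E. apply Hd; lia.
Qed.

Lemma Kfrac m : forall (a : nat -> R) z, distinct_nodes a (S m) ->
  (forall i, (1 <= i <= S m)%nat -> Csub z (Cof (a i)) <> C0) ->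
  Cinv (prodC (S m) (fun i => Csub z (Cof (a i)))) =
  sumC (S m) (fun j => Cmul (Cinv (piC a m j)) (Cinv (Csub z (Cof (a j))))).
Proof.
  induction m; intros a z Hd Hz.
  - simpl. unfold piC; simpl. assert (Csub z (Cof (a 1%nat)) <> C0) by (apply Hz; lia).
    field. split; auto. intro E; injection E; lra.
  - 
    assert (Hd' : distinct_nodes a (S m)) by (intros i j Hi Hj; apply Hd; lia).
    assert (Hze : Csub z (Cof (a (S (S m)))) <> C0) by (apply Hz; lia).
    assert (HP : prodC (S m) (fun i => Csub z (Cof (a i))) <> C0)
      by (apply prodC_neq0; intros; apply Hz; lia).
    pose proof (IHm a z Hd' ltac:(intros; apply Hz; lia)) as I1.
    pose proof (IHm a (Cof (a (S (S m)))) Hd' ltac:(intros; apply Csub_Cof_neq0; apply Hd; lia)) as I2.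
    change (prodC (S (S m)) (fun i => Csub z (Cof (a i)))) with
      (Cmul (prodC (S m) (fun i => Csub z (Cof (a i)))) (Csub z (Cof (a (S (S m)))))).
    change (sumC (S (S m)) (fun j => Cmul (Cinv (piC a (S m) j)) (Cinv (Csub z (Cof (a j)))))) with
      (Cadd (sumC (S m) (fun j => Cmul (Cinv (piC a (S m) j)) (Cinv (Csub z (Cof (a j))))))
            (Cmul (Cinv (piC a (S m) (S (S m)))) (Cinv (Csub z (Cof (a (S (S m)))))))).
    rewrite piC_last.
    rewrite I2.
    rewrite (sumC_ext (S m) _ (fun j => Cmul (Cinv (piC a m j)) (Cmul (Cinv (Csub (Cof (a j)) (Cof (a (S (S m)))))) (Cinv (Csub z (Cof (a j))))))).
    2:{ intros j Hj. rewrite piC_S by lia.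
        assert (piC a m j <> C0) by (apply piC_neq0; auto; lia).
        assert (Csub (Cof (a j)) (Cof (a (S (S m)))) <> C0) by (apply Csub_Cof_neq0, Hd; lia).
        assert (Csub z (Cof (a j)) <> C0) by (apply Hz; lia).
        field. auto. }
    replace (Cinv (Cmul (prodC (S m) (fun i => Csub z (Cof (a i)))) (Csub z (Cof (a (S (S m))))))) with
      (Cmul (Cinv (Csub z (Cof (a (S (S m)))))) (Cinv (prodC (S m) (fun i => Csub z (Cof (a i)))))) by (field; auto).
    rewrite I1. rewrite <- !sumC_mull.
    match goal with |- _ = Cadd _ (Cmul ?S ?X) => replace (Cmul S X) with (Cmul X S) by ring end.
    rewrite <- sumC_mull, <- sumC_add. apply sumC_ext. intros j Hj.
    assert (piC a m j <> C0) by (apply piC_neq0; auto; lia).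
    assert (Csub (Cof (a j)) (Cof (a (S (S m)))) <> C0) by (apply Csub_Cof_neq0, Hd; lia).
    assert (Csub (Cof (a (S (S m)))) (Cof (a j)) <> C0) by (apply Csub_Cof_neq0, Hd; lia).
    assert (Csub z (Cof (a j)) <> C0) by (apply Hz; lia).
    field. repeat split; auto.
Qed.


Lemma PF n : forall (Q : rpoly) (a : nat -> R) z, (length Q <= n)%nat -> distinct_nodes a n ->
  (forall i, (1 <= i <= n)%nat -> Csub z (Cof (a i)) <> C0) ->
  Cmul (pevalC Q z) (Cinv (prodC n (fun i => Csub z (Cof (a i))))) =
  sumC n (fun j => Cmul (Cof (peval Q (a j))) (Cmul (Cinv (piC a (pred n) j)) (Cinv (Csub z (Cof (a j)))))).
Proof.
  induction n; intros Q a z Hl Hd Hz.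
  - destruct Q; simpl in Hl; [|lia]. simpl. apply Ceq; simpl; ring.
  - set (Q1 := pdiv Q (a (S n))).
    assert (Hd' : distinct_nodes a n) by (intros i j Hi Hj; apply Hd; lia).
    assert (Hze : Csub z (Cof (a (S n))) <> C0) by (apply Hz; lia).
    assert (HP : prodC n (fun i => Csub z (Cof (a i))) <> C0)
      by (apply prodC_neq0; intros; apply Hz; lia).
    pose proof (IHn Q1 a z ltac:(unfold Q1; rewrite pdiv_len; lia) Hd' ltac:(intros; apply Hz; lia)) as I1.
    pose proof (Kfrac n a z Hd Hz) as K.
    rewrite (pdiv_spec Q (a (S n)) z). fold Q1.
    change (prodC (S n) (fun i => Csub z (Cof (a i)))) with
      (Cmul (prodC n (fun i => Csub z (Cof (a i)))) (Csub z (Cof (a (S n))))).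
    replace (Cmul (Cadd (Cof (peval Q (a (S n)))) (Cmul (Csub z (Cof (a (S n)))) (pevalC Q1 z)))
       (Cinv (Cmul (prodC n (fun i => Csub z (Cof (a i)))) (Csub z (Cof (a (S n)))))))
    with (Cadd (Cmul (Cof (peval Q (a (S n)))) (Cinv (Cmul (prodC n (fun i => Csub z (Cof (a i)))) (Csub z (Cof (a (S n)))))))
               (Cmul (pevalC Q1 z) (Cinv (prodC n (fun i => Csub z (Cof (a i))))))) by (field; auto).
    change (Cmul (prodC n (fun i => Csub z (Cof (a i)))) (Csub z (Cof (a (S n)))))
      with (prodC (S n) (fun i => Csub z (Cof (a i)))).
    rewrite K, I1. simpl (pred (S n)).
    change (sumC (S n) (fun j => Cmul (Cinv (piC a n j)) (Cinv (Csub z (Cof (a j))))))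
      with (Cadd (sumC n (fun j => Cmul (Cinv (piC a n j)) (Cinv (Csub z (Cof (a j))))))
                 (Cmul (Cinv (piC a n (S n))) (Cinv (Csub z (Cof (a (S n))))))).
    change (sumC (S n) (fun j => Cmul (Cof (peval Q (a j))) (Cmul (Cinv (piC a n j)) (Cinv (Csub z (Cof (a j)))))))
      with (Cadd (sumC n (fun j => Cmul (Cof (peval Q (a j))) (Cmul (Cinv (piC a n j)) (Cinv (Csub z (Cof (a j)))))))
                 (Cmul (Cof (peval Q (a (S n)))) (Cmul (Cinv (piC a n (S n))) (Cinv (Csub z (Cof (a (S n)))))))).
    match goal with |- Cadd (Cmul ?c (Cadd ?S1 ?T)) ?S2 = Cadd ?S3 ?T' =>
      transitivity (Cadd (Cadd (Cmul c S1) S2) (Cmul c T)); [ring|] end.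
    f_equal. rewrite <- sumC_mull, <- sumC_add. apply sumC_ext. intros j Hj.
    destruct n as [|n']; [lia|].
    rewrite piC_S by lia. simpl (pred (S n')).
    pose proof (pdiv_specR Q (a (S (S n'))) (a j)) as E. fold Q1 in E.
    apply (f_equal Cof) in E. rewrite Cof_add, Cof_mul, Cof_sub in E. rewrite E.
    assert (piC a n' j <> C0) by (apply piC_neq0; auto; lia).
    assert (Csub (Cof (a j)) (Cof (a (S (S n')))) <> C0) by (apply Csub_Cof_neq0, Hd; lia).
    assert (Csub z (Cof (a j)) <> C0) by (apply Hz; lia).
    field. auto.
Qed.

Definition Cconj (z : C) : C := (fst z, - snd z).

Lemma form (Ax Ay Bx By ax ay bx by_ : R) :
  fst (Cmul (Cmul (Cconj (Ax,Ay)) (Cconj (Bx,By))) (Cmul (ax,ay) (bx,by_))) =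
  (Ax*ax + Ay*ay)*(Bx*bx + By*by_) - (Ax*ay - Ay*ax)*(Bx*by_ - By*bx).
Proof. unfold Cmul, Cconj; simpl; ring. Qed.

Lemma posform N wr wi M yr yi : 0 <= N -> 0 <= M -> wi*wi <= N*N -> yi*yi <= M*M ->
  0 < wr -> 0 < yr -> 0 < (N+wr)*(M+yr) - wi*yi.
Proof.
  intros. assert (-N <= wi <= N) by nra. assert (-M <= yi <= M) by nra. nra.
Qed.

Lemma half (x1 y1 x2 y2 : R) : 0 < x1*x2 + y1*y2 ->
  let N1 := sqrt (x1*x1+y1*y1) in let N2 := sqrt (x2*x2+y2*y2) in
  0 < N1 /\ 0 < N2 /\
  (x1*N2 + x2*N1)*x1 + (y1*N2+y2*N1)*y1 = N1*(N1*N2 + (x1*x2+y1*y2)) /\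
  (x1*N2 + x2*N1)*y1 - (y1*N2+y2*N1)*x1 = N1*(x2*y1 - x1*y2) /\
  (x1*N2 + x2*N1)*x2 + (y1*N2+y2*N1)*y2 = N2*(N1*N2 + (x1*x2+y1*y2)) /\
  (x1*N2 + x2*N1)*y2 - (y1*N2+y2*N1)*x2 = N2*(-(x2*y1 - x1*y2)) /\
  (x2*y1 - x1*y2)*(x2*y1 - x1*y2) <= (N1*N2)*(N1*N2).
Proof.
  intros H N1 N2.
  assert (h1 : N1*N1 = x1*x1+y1*y1) by (apply sqrt_sqrt; nra).
  assert (h2 : N2*N2 = x2*x2+y2*y2) by (apply sqrt_sqrt; nra).
  assert (g1 : 0 < x1*x1+y1*y1).
  { destruct (Req_dec x1 0); [subst; destruct (Req_dec y1 0); [subst; lra| nra] | nra]. }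
  assert (g2 : 0 < x2*x2+y2*y2).
  { destruct (Req_dec x2 0); [subst; destruct (Req_dec y2 0); [subst; lra| nra] | nra]. }
  assert (p1 : 0 < N1) by (apply sqrt_lt_R0; lra).
  assert (p2 : 0 < N2) by (apply sqrt_lt_R0; lra).
  repeat split; auto.
  - transitivity (N2*(x1*x1+y1*y1) + N1*(x1*x2+y1*y2)); [ring| rewrite <- h1; ring].
  - ring.
  - transitivity (N1*(x2*x2+y2*y2) + N2*(x1*x2+y1*y2)); [ring| rewrite <- h2; ring].
  - ring.
  - replace ((N1*N2)*(N1*N2)) with ((N1*N1)*(N2*N2)) by ring. rewrite h1, h2. nra.
Qed.

Lemma key4 (a1 a2 b1 b2 : C) : 0 < fst (Cmul a1 (Cconj a2)) -> 0 < fst (Cmul b1 (Cconj b2)) ->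
  exists l, 0 < fst (Cmul l (Cmul a1 b1)) /\ 0 < fst (Cmul l (Cmul a1 b2)) /\
            0 < fst (Cmul l (Cmul a2 b1)) /\ 0 < fst (Cmul l (Cmul a2 b2)).
Proof.
  destruct a1 as [x1 y1], a2 as [x2 y2], b1 as [u1 v1], b2 as [u2 v2].
  intros Ha Hb. unfold Cmul, Cconj in Ha, Hb; simpl in Ha, Hb.
  replace (x1*x2 - y1*(-y2)) with (x1*x2+y1*y2) in Ha by ring.
  replace (u1*u2 - v1*(-v2)) with (u1*u2+v1*v2) in Hb by ring.
  pose proof (half x1 y1 x2 y2 Ha) as [p1 [p2 [e1 [e2 [e3 [e4 e5]]]]]].
  pose proof (half u1 v1 u2 v2 Hb) as [q1 [q2 [f1 [f2 [f3 [f4 f5]]]]]].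
  set (N1 := sqrt (x1*x1+y1*y1)) in *. set (N2 := sqrt (x2*x2+y2*y2)) in *.
  set (M1 := sqrt (u1*u1+v1*v1)) in *. set (M2 := sqrt (u2*u2+v2*v2)) in *.
  exists (Cmul (Cconj (x1*N2 + x2*N1, y1*N2+y2*N1)) (Cconj (u1*M2 + u2*M1, v1*M2+v2*M1))).
  assert (0 <= N1*N2) by nra. assert (0 <= M1*M2) by nra.
  repeat split; rewrite form;
  [rewrite e1, e2, f1, f2 | rewrite e1, e2, f3, f4 | rewrite e3, e4, f1, f2 | rewrite e3, e4, f3, f4].
  - replace (N1 * (N1 * N2 + (x1 * x2 + y1 * y2)) * (M1 * (M1 * M2 + (u1 * u2 + v1 * v2))) -
             N1 * (x2 * y1 - x1 * y2) * (M1 * (u2 * v1 - u1 * v2))) with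
      (N1*M1*((N1 * N2 + (x1 * x2 + y1 * y2))*(M1 * M2 + (u1 * u2 + v1 * v2)) - (x2 * y1 - x1 * y2)*(u2 * v1 - u1 * v2))) by ring.
    apply Rmult_lt_0_compat; [nra|]. apply posform; auto.
  - replace (N1 * (N1 * N2 + (x1 * x2 + y1 * y2)) * (M2 * (M1 * M2 + (u1 * u2 + v1 * v2))) -
             N1 * (x2 * y1 - x1 * y2) * (M2 * - (u2 * v1 - u1 * v2))) with
      (N1*M2*((N1 * N2 + (x1 * x2 + y1 * y2))*(M1 * M2 + (u1 * u2 + v1 * v2)) - (x2 * y1 - x1 * y2)*(-(u2 * v1 - u1 * v2)))) by ring.
    apply Rmult_lt_0_compat; [nra|]. apply posform; auto. nra.
  - replace (N2 * (N1 * N2 + (x1 * x2 + y1 * y2)) * (M1 * (M1 * M2 + (u1 * u2 + v1 * v2))) -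
             N2 * - (x2 * y1 - x1 * y2) * (M1 * (u2 * v1 - u1 * v2))) with
      (N2*M1*((N1 * N2 + (x1 * x2 + y1 * y2))*(M1 * M2 + (u1 * u2 + v1 * v2)) - (-(x2 * y1 - x1 * y2))*(u2 * v1 - u1 * v2))) by ring.
    apply Rmult_lt_0_compat; [nra|]. apply posform; auto. nra.
  - replace (N2 * (N1 * N2 + (x1 * x2 + y1 * y2)) * (M2 * (M1 * M2 + (u1 * u2 + v1 * v2))) -
             N2 * - (x2 * y1 - x1 * y2) * (M2 * - (u2 * v1 - u1 * v2))) with
      (N2*M2*((N1 * N2 + (x1 * x2 + y1 * y2))*(M1 * M2 + (u1 * u2 + v1 * v2)) - (-(x2 * y1 - x1 * y2))*(-(u2 * v1 - u1 * v2)))) by ring.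
    apply Rmult_lt_0_compat; [nra|]. apply posform; auto; nra.
Qed.

Lemma key_ab (a1 a2 b1 b2 : C) : 0 < fst (Cmul a1 (Cconj a2)) -> 0 < fst (Cmul b1 (Cconj b2)) ->
  exists l, forall al be, 0 <= al * be -> (al <> 0 \/ be <> 0) ->
    0 < fst (Cmul l (Cmul (Cadd (Cmul (Cof al) a1) (Cmul (Cof be) a2))
                          (Cadd (Cmul (Cof al) b1) (Cmul (Cof be) b2)))).
Proof.
  intros Ha Hb. destruct (key4 a1 a2 b1 b2 Ha Hb) as [l [h1 [h2 [h3 h4]]]].
  exists l. intros al be H1 H2.
  assert (E : fst (Cmul l (Cmul (Cadd (Cmul (Cof al) a1) (Cmul (Cof be) a2))
                          (Cadd (Cmul (Cof al) b1) (Cmul (Cof be) b2)))) =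
     al*al*fst (Cmul l (Cmul a1 b1)) + al*be*(fst (Cmul l (Cmul a1 b2)) + fst (Cmul l (Cmul a2 b1)))
     + be*be*fst (Cmul l (Cmul a2 b2))).
  { destruct l, a1, a2, b1, b2. unfold Cmul, Cadd, Cof; simpl; ring. }
  rewrite E. destruct H2 as [H2|H2].
  - assert (0 < al*al) by nra. nra.
  - assert (0 < be*be) by nra. nra.
Qed.

Lemma inv_pos l X : 0 < fst (Cmul l X) -> 0 < fst (Cmul (Cconj l) (Cinv X)).
Proof.
  destruct l as [l1 l2], X as [x y]. unfold Cmul, Cconj, Cinv; cbn [fst snd]. intros H.
  assert (Hn : 0 < x^2 + y^2).
  { destruct (Req_dec x 0); [subst; destruct (Req_dec y 0); [subst; lra| nra] | nra]. }
  replace (l1 * (x / (x ^ 2 + y ^ 2)) - - l2 * (- y / (x ^ 2 + y ^ 2))) with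
    ((l1 * x - l2 * y) / (x^2+y^2)) by (field; lra).
  apply Rdiv_lt_0_compat; lra.
Qed.

Lemma disk_sq a b u : in_diam_disk a b u ->
  (fst u - (a+b)/2)^2 + (snd u)^2 < ((b-a)/2)^2.
Proof.
  unfold in_diam_disk, Cnorm, Csub, Cof; cbn [fst snd]. intros H.
  set (X := (fst u - (a + b) / 2) ^ 2 + (snd u - 0) ^ 2) in *.
  assert (0 <= X) by (unfold X; apply Rplus_le_le_0_compat; apply pow2_ge_0).
  pose proof (sqrt_sqrt X H0). pose proof (sqrt_pos X).
  replace ((snd u)^2) with ((snd u - 0)^2) by ring. fold X. nra.
Qed.

Lemma ext_sq a b u : a < b -> in_exterior a b u ->
  (fst u - (a+b)/2)^2 + (snd u)^2 > ((b-a)/2)^2.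
Proof.
  unfold in_exterior, Cnorm, Csub, Cof; cbn [fst snd]. intros Hab H.
  set (X := (fst u - (a + b) / 2) ^ 2 + (snd u - 0) ^ 2) in *.
  assert (0 <= X) by (unfold X; apply Rplus_le_le_0_compat; apply pow2_ge_0).
  pose proof (sqrt_sqrt X H0). pose proof (sqrt_pos X).
  replace ((snd u)^2) with ((snd u - 0)^2) by ring. fold X. nra.
Qed.



Lemma HPgen a b u v (a2 b2 : C) (sg : R) :
  a < b -> (a2 = Csub u (Cof a) /\ b2 = Csub v (Cof a) /\ sg = 1 \/
            a2 = Csub (Cof a) u /\ b2 = Csub (Cof a) v /\ sg = -1) ->
  0 < fst (Cmul (Csub (Cof b) u) (Cconj a2)) -> 0 < fst (Cmul (Csub (Cof b) v) (Cconj b2)) ->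
  exists l, forall t, 0 <= (t - a) * (sg * (t - b)) ->
    0 < fst (Cmul l (Cinv (Cmul (Csub u (Cof t)) (Csub v (Cof t))))).
Proof.
  intros Hab Hs Ha Hb. destruct (key_ab _ _ _ _ Ha Hb) as [l Hl].
  exists (Cconj l). intros t Ht. apply inv_pos.
  assert (Hba : b - a <> 0) by lra.
  assert (E1 : Csub u (Cof t) = Cmul (Cof (- / (b - a)))
     (Cadd (Cmul (Cof (t - a)) (Csub (Cof b) u)) (Cmul (Cof (sg * (t - b))) a2))).
  { destruct Hs as [[-> [-> ->]]|[-> [-> ->]]]; destruct u; apply Ceq; simpl; field; auto. }
  assert (E2 : Csub v (Cof t) = Cmul (Cof (- / (b - a)))
     (Cadd (Cmul (Cof (t - a)) (Csub (Cof b) v)) (Cmul (Cof (sg * (t - b))) b2))).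
  { destruct Hs as [[-> [-> ->]]|[-> [-> ->]]]; destruct v; apply Ceq; simpl; field; auto. }
  rewrite E1, E2.
  match goal with |- 0 < fst (Cmul l (Cmul (Cmul ?c ?X) (Cmul ?c ?Y))) =>
    replace (Cmul l (Cmul (Cmul c X) (Cmul c Y))) with (Cmul (Cmul c c) (Cmul l (Cmul X Y))) by ring end.
  rewrite <- Cof_mul.
  assert (Hpos : 0 < fst (Cmul l (Cmul (Cadd (Cmul (Cof (t - a)) (Csub (Cof b) u)) (Cmul (Cof (sg * (t - b))) a2))
                          (Cadd (Cmul (Cof (t - a)) (Csub (Cof b) v)) (Cmul (Cof (sg * (t - b))) b2))))).
  { apply Hl; auto. destruct (Req_dec t a); [right|left]; [|lra].
    destruct Hs as [[_ [_ ->]]|[_ [_ ->]]]; subst; lra. }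
  set (Z := Cmul l _) in *. destruct Z as [z1 z2]. unfold Cmul, Cof; simpl. simpl in Hpos.
  assert (0 < - / (b - a) * - / (b - a)).
  { assert (/ (b - a) <> 0) by (apply Rinv_neq_0_compat; auto). nra. }
  nra.
Qed.

Lemma HPdisk a b u v : a < b -> in_diam_disk a b u -> in_diam_disk a b v ->
  exists l, forall t, (t <= a \/ b <= t) ->
    0 < fst (Cmul l (Cinv (Cmul (Csub u (Cof t)) (Csub v (Cof t))))).
Proof.
  intros Hab Hu Hv. apply disk_sq in Hu. apply disk_sq in Hv.
  destruct (HPgen a b u v (Csub u (Cof a)) (Csub v (Cof a)) 1 Hab) as [l Hl].
  - left; auto.
  - destruct u as [x y]; unfold Cmul, Csub, Cconj, Cof in *; cbn [fst snd] in *. nra.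
  - destruct v as [x y]; unfold Cmul, Csub, Cconj, Cof in *; cbn [fst snd] in *. nra.
  - exists l. intros t Ht. apply Hl. destruct Ht; nra.
Qed.

Lemma HPext a b u v : a < b -> in_exterior a b u -> in_exterior a b v ->
  exists l, forall t, a <= t <= b ->
    0 < fst (Cmul l (Cinv (Cmul (Csub u (Cof t)) (Csub v (Cof t))))).
Proof.
  intros Hab Hu Hv. apply ext_sq in Hu; auto. apply ext_sq in Hv; auto.
  destruct (HPgen a b u v (Csub (Cof a) u) (Csub (Cof a) v) (-1) Hab) as [l Hl].
  - right; auto.
  - destruct u as [x y]; unfold Cmul, Csub, Cconj, Cof in *; cbn [fst snd] in *. nra.
  - destruct v as [x y]; unfold Cmul, Csub, Cconj, Cof in *; cbn [fst snd] in *. nra.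
  - exists l. intros t Ht. apply Hl. nra.
Qed.

Lemma inj_core (n : nat) (a : nat -> R) (d : nat -> R) (z1 z2 l : C) :
  (1 <= n)%nat ->
  (forall j, (1 <= j <= n)%nat -> Csub z1 (Cof (a j)) <> C0) ->
  (forall j, (1 <= j <= n)%nat -> Csub z2 (Cof (a j)) <> C0) ->
  (forall j, (1 <= j <= n)%nat ->
     0 < fst (Cmul l (Cmul (Cof (d j)) (Cinv (Cmul (Csub z1 (Cof (a j))) (Csub z2 (Cof (a j)))))))) ->
  sumC n (fun j => Cmul (Cof (d j)) (Cinv (Csub z1 (Cof (a j))))) =
  sumC n (fun j => Cmul (Cof (d j)) (Cinv (Csub z2 (Cof (a j))))) -> z1 = z2.
Proof.
  intros Hn H1 H2 Hp E.
  destruct (classic (z1 = z2)) as [|Hne]; auto. exfalso.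
  set (S := sumC n (fun j => Cmul (Cof (d j)) (Cinv (Cmul (Csub z1 (Cof (a j))) (Csub z2 (Cof (a j))))))).
  assert (ES : Cmul (Csub z2 z1) S = C0).
  { unfold S. rewrite <- sumC_mull.
    transitivity (Csub (sumC n (fun j => Cmul (Cof (d j)) (Cinv (Csub z1 (Cof (a j))))))
                       (sumC n (fun j => Cmul (Cof (d j)) (Cinv (Csub z2 (Cof (a j))))))).
    2:{ rewrite E. ring. }
    transitivity (sumC n (fun j => Cadd (Cmul (Cof (d j)) (Cinv (Csub z1 (Cof (a j)))))
                       (Cmul (Cof (-1)) (Cmul (Cof (d j)) (Cinv (Csub z2 (Cof (a j)))))))).
    - apply sumC_ext. intros j Hj. specialize (H1 j Hj). specialize (H2 j Hj).
      replace (Cof (-1)) with (Copp C1) by (apply Ceq; simpl; ring).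
      field. auto.
    - rewrite sumC_add, sumC_mull. replace (Cof (-1)) with (Copp C1) by (apply Ceq; simpl; ring). ring. }
  assert (Hz : Csub z2 z1 <> C0).
  { intro Z. apply Hne. destruct z1, z2; injection Z; intros. f_equal; lra. }
  pose proof (Cmul_eq0 _ _ ES Hz) as S0.
  assert (Hpos : 0 < fst (Cmul l S)).
  { unfold S. rewrite <- sumC_mull, sumC_fst. apply sumR_pos; auto. }
  rewrite S0 in Hpos. destruct l; unfold Cmul, C0 in Hpos; simpl in Hpos. lra.
Qed.

Lemma mono (k : nat) (pr : nat -> R) (hpinc : forall i, (1 <= i < k)%nat -> pr i < pr (S i)) :
  forall j i, (1 <= i)%nat -> (i < j)%nat -> (j <= k)%nat -> pr i < pr j.
Proof.
  induction j; intros i H1 H2 H3. lia.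
  destruct (Nat.eq_dec i j) as [->|Hne]. apply hpinc; lia.
  assert (pr i < pr j) by (apply IHj; lia). assert (pr j < pr (S j)) by (apply hpinc; lia). lra.
Qed.

Lemma notroot p z t : pevalC p z <> C0 -> peval p t = 0 -> Csub z (Cof t) <> C0.
Proof.
  intros H Ht E. apply H. destruct z as [x y]. unfold Csub, Cof, C0 in E; simpl in E.
  injection E; intros. replace (x, y) with (Cof t) by (unfold Cof; f_equal; lra).
  rewrite pevalC_Cof, Ht. reflexivity.
Qed.

Lemma fst_scale M l e W : fst (Cmul (Cmul (Cof M) l) (Cmul (Cof e) W)) = M * e * fst (Cmul l W).
Proof. destruct l, W; unfold Cmul, Cof; simpl; ring. Qed.

Lemma Cof_neq0 x : Cof x <> C0 -> x <> 0.
Proof. intros H E; apply H; subst; reflexivity. Qed.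

Lemma main_core (k : nat) (hk : (2 <= k)%nat)
  (p q : rpoly) (hdp : has_degree p k) (hdq : has_degree q (k - 1))
  (pr qr : nat -> R)
  (hpr : forall i, (1 <= i <= k)%nat -> peval p (pr i) = 0)
  (hpinc : forall i, (1 <= i < k)%nat -> pr i < pr (S i))
  (hqr : forall i, (1 <= i <= k - 1)%nat -> peval q (qr i) = 0)
  (hinter : forall i, (1 <= i <= k - 1)%nat -> pr i < qr i < pr (S i))
  (w : C) (hw : w <> C0) (z1 z2 l : C) :
  is_solution p q w z1 -> is_solution p q w z2 ->
  (forall j, (1 <= j <= k)%nat ->
     0 < fst (Cmul l (Cinv (Cmul (Csub z1 (Cof (pr j))) (Csub z2 (Cof (pr j))))))) ->
  z1 = z2.
Proof.
  intros [Hp1 Hs1] [Hp2 Hs2] Hl.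
  pose proof (mono k pr hpinc) as Hmono.
  assert (Dp : distinct_nodes pr k).
  { intros i j Hi Hj Hij. destruct (Nat.lt_total i j) as [Hlt|[Heq|Hgt]]; [|lia|].
    - assert (pr i < pr j) by (apply Hmono; lia). lra.
    - assert (pr j < pr i) by (apply Hmono; lia). lra. }
  assert (Dq : distinct_nodes qr (k - 1)).
  { assert (forall i j, (1 <= i)%nat -> (i < j)%nat -> (j <= k - 1)%nat -> qr i < qr j).
    { intros i j ? ? ?. assert (pr (S i) <= pr j).
      { destruct (Nat.eq_dec (S i) j) as [<-|]; [lra|]. left; apply Hmono; lia. }
      pose proof (hinter i ltac:(lia)). pose proof (hinter j ltac:(lia)). lra. }
    intros i j Hi Hj Hij. destruct (Nat.lt_total i j) as [Hlt|[Heq|Hgt]]; [|lia|].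
    - assert (qr i < qr j) by (apply H; lia). lra.
    - assert (qr j < qr i) by (apply H; lia). lra. }
  destruct hdp as [Lp _]. destruct hdq as [Lq _].
  destruct (factor k p pr ltac:(lia) Dp hpr) as [L HL].
  destruct (factor (k - 1) q qr ltac:(lia) Dq hqr) as [M HM].
  assert (N1 : forall j, (1 <= j <= k)%nat -> Csub z1 (Cof (pr j)) <> C0)
    by (intros; apply (notroot p); auto).
  assert (N2 : forall j, (1 <= j <= k)%nat -> Csub z2 (Cof (pr j)) <> C0)
    by (intros; apply (notroot p); auto).
  assert (HL0 : Cof L <> C0).
  { intro E. apply Hp1. rewrite HL, E. change (@pair R R 0 0) with C0. ring. }
  assert (HM0 : M <> 0).
  { intro E. apply hw. rewrite <- Hs1. unfold Cdiv. rewrite HM, E. rewrite Cof0. change (@pair R R 0 0) with C0. ring. }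
  set (e := fun j => peval q (pr j) / piR pr (pred k) j).
  assert (Hf : forall z, pevalC p z <> C0 -> (forall j, (1 <= j <= k)%nat -> Csub z (Cof (pr j)) <> C0) ->
     Cdiv (pevalC q z) (pevalC p z) =
     Cmul (Cinv (Cof L)) (sumC k (fun j => Cmul (Cof (e j)) (Cinv (Csub z (Cof (pr j))))))).
  { intros z Hz Hzj. unfold Cdiv. rewrite HL.
    assert (HP : prodC k (fun i => Csub z (Cof (pr i))) <> C0) by (apply prodC_neq0; auto).
    replace (Cmul (pevalC q z) (Cinv (Cmul (Cof L) (prodC k (fun i => Csub z (Cof (pr i)))))))
      with (Cmul (Cinv (Cof L)) (Cmul (pevalC q z) (Cinv (prodC k (fun i => Csub z (Cof (pr i)))))))
      by (field; auto).
    rewrite (PF k q pr z ltac:(lia) Dp Hzj). f_equal. apply sumC_ext. intros j Hj.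
    unfold e. assert (Hpi : piR pr (pred k) j <> 0).
    { apply Cof_neq0. rewrite <- piC_R. apply piC_neq0; rewrite Nat.succ_pred_pos by lia; auto. }
    unfold Rdiv. rewrite piC_R, Cof_mul, Cof_inv by auto. ring. }
  rewrite (Hf z1 Hp1 N1) in Hs1. rewrite (Hf z2 Hp2 N2) in Hs2.
  rewrite <- Hs2 in Hs1.
  assert (ES : sumC k (fun j => Cmul (Cof (e j)) (Cinv (Csub z1 (Cof (pr j))))) =
               sumC k (fun j => Cmul (Cof (e j)) (Cinv (Csub z2 (Cof (pr j)))))).
  { apply (f_equal (Cmul (Cof L))) in Hs1.
    replace (Cmul (Cof L) (Cmul (Cinv (Cof L)) (sumC k (fun j => Cmul (Cof (e j)) (Cinv (Csub z1 (Cof (pr j))))))))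
      with (sumC k (fun j => Cmul (Cof (e j)) (Cinv (Csub z1 (Cof (pr j)))))) in Hs1 by (field; auto).
    replace (Cmul (Cof L) (Cmul (Cinv (Cof L)) (sumC k (fun j => Cmul (Cof (e j)) (Cinv (Csub z2 (Cof (pr j))))))))
      with (sumC k (fun j => Cmul (Cof (e j)) (Cinv (Csub z2 (Cof (pr j)))))) in Hs1 by (field; auto).
    exact Hs1. }
  apply (inj_core k pr e z1 z2 (Cmul (Cof M) l) ltac:(lia) N1 N2); auto.
  intros j Hj. rewrite fst_scale.
  assert (0 < M * e j); [|specialize (Hl j Hj); nra].
  assert (Hq : peval q (pr j) = M * prodR (k - 1) (fun i => pr j - qr i)).
  { apply Cof_inj. rewrite <- pevalC_Cof, HM, Cof_mul, <- prodC_Cof. f_equal.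
    apply prodC_ext; intros; symmetry; apply Cof_sub. }
  assert (Hprod : 0 < prodR (k - 1) (fun i => pr j - qr i) * piR pr (pred k) j).
  { unfold piR. replace (pred k) with (k - 1)%nat by lia. rewrite <- prodR_mul.
    apply prodR_pos. intros i Hi. unfold skip. destruct (i <? j)%nat eqn:Eij.
    - apply Nat.ltb_lt in Eij. pose proof (hinter i ltac:(lia)).
      assert (pr (S i) <= pr j).
      { destruct (Nat.eq_dec (S i) j) as [<-|]; [lra|]. left; apply Hmono; lia. }
      assert (pr i < pr j) by (apply Hmono; lia). nra.
    - apply Nat.ltb_ge in Eij. pose proof (hinter i ltac:(lia)).
      assert (pr j <= pr i).
      { destruct (Nat.eq_dec i j) as [->|]; [lra|]. left; apply Hmono; lia. }
      assert (pr j < pr (S i)) by (apply Hmono; lia). nra. }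
  unfold e. rewrite Hq.
  set (A := prodR (k - 1) (fun i => pr j - qr i)) in *.
  set (P := piR pr (pred k) j) in *.
  assert (P <> 0) by (intro E; rewrite E in Hprod; lra).
  replace (M * (M * A / P)) with ((M * M) * (A * P) / (P * P)) by (field; auto).
  apply Rdiv_lt_0_compat. apply Rmult_lt_0_compat; nra. nra.
Qed.

Lemma polar_neq0 r phi : 0 < r -> Cpolar r phi <> C0.
Proof.
  intros hr E. unfold Cpolar, C0 in E. injection E; intros E2 E1.
  pose proof (sin2_cos2 phi). unfold Rsqr in H.
  assert (cos phi = 0) by (apply Rmult_integral in E1 as [|]; [lra|auto]).
  assert (sin phi = 0) by (apply Rmult_integral in E2 as [|]; [lra|auto]).
  rewrite H0, H1 in H. lra.
Qed.

Theorem corollary1 (k : nat) (hk : (2 <= k)%nat)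
  (p q : rpoly) (hdp : has_degree p k) (hdq : has_degree q (k - 1))
  (pr qr : nat -> R)
  (hpr : forall i, (1 <= i <= k)%nat -> peval p (pr i) = 0)
  (hpinc : forall i, (1 <= i < k)%nat -> pr i < pr (S i))
  (hqr : forall i, (1 <= i <= k - 1)%nat -> peval q (qr i) = 0)
  (hinter : forall i, (1 <= i <= k - 1)%nat -> pr i < qr i < pr (S i))
  (r phi : R) (hr : 0 < r) (hphi : - PI < phi <= PI) :
  (forall j, (1 <= j <= k - 1)%nat ->
     at_most_one (fun z => in_diam_disk (pr j) (pr (S j)) z /\
                           is_solution p q (Cpolar r phi) z)) /\
  at_most_one (fun z => in_exterior (pr 1%nat) (pr k) z /\
                        is_solution p q (Cpolar r phi) z).
Proof.
  pose proof (mono k pr hpinc) as Hmono.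
  pose proof (polar_neq0 r phi hr) as hw.
  split.
  - intros j Hj z1 z2 [D1 S1] [D2 S2].
    assert (Hab : pr j < pr (S j)) by (apply hpinc; lia).
    destruct (HPdisk _ _ _ _ Hab D1 D2) as [l Hl].
    apply (main_core k hk p q hdp hdq pr qr hpr hpinc hqr hinter _ hw z1 z2 l S1 S2).
    intros jj Hjj. apply Hl.
    destruct (Nat.le_gt_cases jj j).
    + left. destruct (Nat.eq_dec jj j) as [->|]; [lra|]. left; apply Hmono; lia.
    + right. destruct (Nat.eq_dec jj (S j)) as [->|]; [lra|]. left; apply Hmono; lia.
  - intros z1 z2 [D1 S1] [D2 S2].
    assert (Hab : pr 1%nat < pr k) by (apply Hmono; lia).
    destruct (HPext _ _ _ _ Hab D1 D2) as [l Hl].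
    apply (main_core k hk p q hdp hdq pr qr hpr hpinc hqr hinter _ hw z1 z2 l S1 S2).
    intros jj Hjj. apply Hl. split.
    + destruct (Nat.eq_dec jj 1) as [->|]; [lra|]. left; apply Hmono; lia.
    + destruct (Nat.eq_dec jj k) as [->|]; [lra|]. left; apply Hmono; lia.
Qed.
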